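(* Let $\mathcal N=\mathcal N(x)$ be a nowhere vanishing function on $S$ (lifted to $T^*S$). Then $\mathcal N$ is a conformal factor for the almost symplectic form $\Omega+\sigma+\rho^*\mathbf f$ on $T^*S$ (i.e. $d(\mathcal N(\Omega+\sigma+\rho^*\mathbf f))=0$) if and only if $\mathcal N$ is a conformal factor for the almost symplectic form $\Omega+\sigma$ (i.e. $d(\mathcal N(\Omega+\sigma))=0$) and the two-form $\mathbf f^*=\mathcal N\mathbf f$ on $S$ is closed.
   Context: Setting: $S$ ($\dim S=n$) is the base of a gyroscopic $G$–Chaplygin system: $G$ acts freely on $Q$, $\pi\colon Q\to S=Q/G$, $L=\frac12\mathbf G(\dot q,\dot q)-V$ with $G$-invariant $\mathbf G,V$, $\mathbf F$ a $G$-invariant two-form on $Q$, $\mathcal D$ a $G$-invariant distribution complementary to $\ker d\pi$. Reduced data on $S$: metric $\mathbf g(X,Y)=\mathbf G(X^h,Y^h)$, two-form $\mathbf f(X,Y)=\mathbf F(X^h,Y^h)$ ($X^h\in\mathcal D$ horizontal lift), $\Sigma(X,Y,Z)=\mathbf G(X^h,B(Y^h,Z^h))$ where $B(X,Y)=-A([X^h,Y^h])$ is the curvature of $\mathcal D$, and the skew $(1,2)$-tensor $\mathbf C$ with $\Sigma(X,Y,Z)=\mathbf g(X,\mathbf C(Y,Z))$, locally $\mathbf C(\partial_i,\partial_j)=\sum_kC^k_{ij}\partial_k$. On $T^*S$ with canonical coordinates $(x,p)$: $\Omega=\sum_idp_i\wedge dx_i$, $\sigma=\sum_{1\le i<j\le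 n}\sum_kC^k_{ij}(x)p_k\,dx_i\wedge dx_j$, and $\rho\colon T^*S\to S$ is the projection. An almost symplectic form is a nondegenerate (not necessarily closed) two-form. *)

(* Defs.v *)
From HB Require Import structures.
From mathcomp Require Import all_boot all_order all_algebra.
From mathcomp Require Import all_classical all_reals all_analysis.
Set Implicit Arguments. Unset Strict Implicit. Unset Printing Implicit Defensive.
Import Order.TTheory GRing.Theory Num.Theory.
Import numFieldNormedType.Exports.
Local Open Scope classical_set_scope.
Local Open Scope ring_scope.

Section Defs.
Variable R : realType.

Fixpoint iterD (m : nat) (vs : seq 'rV[R]_m) (f : 'rV[R]_m -> R) : 'rV[R]_m -> R :=
  match vs with
  | [::] => f
  | v :: vs' => fun x => 'D_v (iterD vs' f) x
  end.

Definition smooth_on (m : nat) (U : set 'rV[R]_m) (f : 'rV[R]_m -> R) : Prop :=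
  forall (vs : seq 'rV[R]_m) (x : 'rV[R]_m), U x -> differentiable (iterD vs f) x.

Definition partial (m : nat) (f : 'rV[R]_m -> R) (a : 'I_m) (x : 'rV[R]_m) : R :=
  'D_(delta_mx 0 a) f x.

(* A two-form on an open set of R^m is given by its components
   om a b = om(d/dy_a, d/dy_b), i.e. om = sum_{a<b} om a b dy_a /\ dy_b. *)
Definition form2 (m : nat) := 'I_m -> 'I_m -> 'rV[R]_m -> R.

Definition d2 (m : nat) (om : form2 m) (a b c : 'I_m) (x : 'rV[R]_m) : R :=
  partial (om b c) a x + partial (om c a) b x + partial (om a b) c x.

Definition closed2 (m : nat) (W : set 'rV[R]_m) (om : form2 m) : Prop :=
  forall x, W x -> forall a b c, d2 om a b c x = 0.

Definition add2 (m : nat) (om1 om2 : form2 m) : form2 m :=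
  fun a b x => om1 a b x + om2 a b x.

Definition scale2 (m : nat) (N : 'rV[R]_m -> R) (om : form2 m) : form2 m :=
  fun a b x => N x * om a b x.

(* T^*U with canonical coordinates y = (x, p) in R^(n+n): x = lsubmx y, p = rsubmx y *)
Definition xpart (n : nat) (y : 'rV[R]_(n + n)) : 'rV[R]_n := lsubmx y.
Definition ppart (n : nat) (y : 'rV[R]_(n + n)) : 'rV[R]_n := rsubmx y.

(* Omega = sum_i dp_i /\ dx_i *)
Definition Omega (n : nat) : form2 (n + n) :=
  fun a b _ => match fintype.split a, fintype.split b with
             | inr i, inl j => (i == j)%:R
             | inl i, inr j => - (i == j)%:R
             | _, _ => 0
             end.

(* sigma = sum_{i<j} sum_k C^k_{ij}(x) p_k dx_i /\ dx_j, with C k i j = C^k_{ij} skew in i,j *)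
Definition sigma (n : nat) (C : 'I_n -> 'I_n -> 'I_n -> 'rV[R]_n -> R) : form2 (n + n) :=
  fun a b y => match fintype.split a, fintype.split b with
             | inl i, inl j => \sum_(k < n) C k i j (xpart y) * ppart y 0 k
             | _, _ => 0
             end.

(* pullback rho^* f of a two-form f on U (f i j = f(d/dx_i, d/dx_j)) *)
Definition pullback (n : nat) (f : form2 n) : form2 (n + n) :=
  fun a b y => match fintype.split a, fintype.split b with
             | inl i, inl j => f i j (xpart y)
             | _, _ => 0
             end.

Definition liftS (n : nat) (N : 'rV[R]_n -> R) : 'rV[R]_(n + n) -> R :=
  fun y => N (xpart y).

Definition conformal_factor (m : nat) (W : set 'rV[R]_m) (N : 'rV[R]_m -> R)
  (om : form2 m) : Prop := closed2 W (scale2 N om).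

End Defs.

(* Main.v *)
Require Import Defs.
From HB Require Import structures.
From mathcomp Require Import all_boot all_order all_algebra.
From mathcomp Require Import all_classical all_reals all_analysis.
From mathcomp Require Import ring.
Import Order.TTheory GRing.Theory Num.Theory.
Import numFieldNormedType.Exports.
Local Open Scope classical_set_scope.
Local Open Scope ring_scope.

Set Implicit Arguments.
Section H.
Variable R : realType.
Variable n : nat.

Lemma line_lem m m' (g : 'rV[R]_m -> R) (g' : 'rV[R]_m' -> R) a v a' v' :
  (forall h : R, g (h *: v + a) = g' (h *: v' + a')) ->
  'D_v g a = 'D_v' g' a' /\ (derivable g a v <-> derivable g' a' v').
Proof.
move=> H.
have H0 : g a = g' a' by have := H 0; rewrite !scale0r !add0r.
have E : (fun h : R => h^-1 *: ((g \o shift a) (h *: v) - g a)) =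
         (fun h : R => h^-1 *: ((g' \o shift a') (h *: v') - g' a')).
  by apply/funext => h /=; rewrite H H0.
by rewrite /derive /derivable E.
Qed.

Lemma xpart_line (h : R) (v y : 'rV[R]_(n + n)) :
  xpart (h *: v + y) = h *: xpart v + xpart y.
Proof. by rewrite /xpart linearD linearZ. Qed.

Lemma comp_x (g : 'rV[R]_n -> R) y v :
  'D_v (fun y => g (xpart y)) y = 'D_(xpart v) g (xpart y) /\
  (derivable (fun y => g (xpart y)) y v <-> derivable g (xpart y) (xpart v)).
Proof. by apply: line_lem => h; rewrite xpart_line. Qed.

Lemma ppart_der (k : 'I_n) y v : derivable (fun y : 'rV[R]_(n+n) => ppart y 0 k) y v.
Proof.
have -> : (fun y : 'rV[R]_(n+n) => ppart y 0 k) = (fun y => y 0 (rshift n k)).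
  by apply/funext => z; rewrite /ppart mxE.
by apply: diff_derivable; apply: differentiable_coord.
Qed.

Lemma lsub_delta_l (i : 'I_n) : lsubmx (delta_mx 0 (lshift n i) : 'rV[R]_(n+n)) = delta_mx 0 i.
Proof. by apply/matrixP => a b; rewrite !mxE eq_lshift. Qed.
Lemma rsub_delta_l (i : 'I_n) : rsubmx (delta_mx 0 (lshift n i) : 'rV[R]_(n+n)) = 0.
Proof. by apply/matrixP => a b; rewrite !mxE [rshift _ _ == _]eq_sym eq_lrshift andbF. Qed.
Lemma lsub_delta_r (i : 'I_n) : lsubmx (delta_mx 0 (rshift n i) : 'rV[R]_(n+n)) = 0.
Proof. by apply/matrixP => a b; rewrite !mxE eq_lrshift andbF. Qed.

Lemma derive_zero m (g : 'rV[R]_m -> R) x : 'D_0 g x = 0.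
Proof.
have H : forall h : R, g (h *: 0 + x) = cst (g x) (h *: 0 + x) by move=> h; rewrite scaler0 add0r.
have [-> _] := @line_lem m m g (cst (g x)) x 0 x 0 H.
exact: derive_cst.
Qed.

End H.

Lemma split_case n (a : 'I_(n+n)) :
  (exists i, a = lshift n i /\ fintype.split a = inl i) \/ (exists i, a = rshift n i /\ fintype.split a = inr i).
Proof.
rewrite -[a](splitK a); case: (fintype.split a) => i; [left|right]; exists i; by rewrite unsplitK.
Qed.

Theorem proposition5p3 (R : realType) (n : nat) (U : set 'rV[R]_n)
  (C : 'I_n -> 'I_n -> 'I_n -> 'rV[R]_n -> R) (f : form2 R n)
  (N : 'rV[R]_n -> R) :
  open U ->
  (forall k i j, smooth_on U (C k i j)) ->
  (forall k i j x, U x -> C k i j x = - C k j i x) ->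
  (forall i j, smooth_on U (f i j)) ->
  (forall i j x, U x -> f i j x = - f j i x) ->
  smooth_on U N ->
  (forall x, U x -> N x != 0) ->
  let W := (@xpart R n) @^-1` U in
  conformal_factor W (liftS N) (add2 (add2 (@Omega R n) (sigma C)) (pullback f)) <->
  (conformal_factor W (liftS N) (add2 (@Omega R n) (sigma C)) /\
   closed2 U (scale2 N f)).
Proof.
move=> oU sC aC sf af sN nz W.
have dN : forall x, U x -> differentiable N x by move=> x Ux; exact: (sN [::] x Ux).
have dC : forall k i j x, U x -> differentiable (C k i j) x by move=> k i j x Ux; exact: (sC k i j [::] x Ux).
have df : forall i j x, U x -> differentiable (f i j) x by move=> i j x Ux; exact: (sf i j [::] x Ux).
set L := liftS N.
set A := add2 (@Omega R n) (sigma C).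
set P := pullback f.
pose T (a b c : 'I_(n+n)) (y : 'rV[R]_(n+n)) : R :=
  match fintype.split a, fintype.split b, fintype.split c with
  | inl i, inl j, inl k => partial (scale2 N f j k) i (xpart y)
  | _, _, _ => 0 end.
have dF : forall y, W y -> forall j k v,
    derivable (fun x => N (xpart x) * f j k (xpart x)) y v.
  move=> y Wy j k v; apply/(comp_x (fun x => N x * f j k x) y v).2.
  apply: diff_derivable; apply: differentiableM; [exact: dN|exact: df].
have dS : forall y, W y -> forall j k v,
    derivable (fun x => N (xpart x) * (0 + \sum_(k0<n) C k0 j k (xpart x) * ppart x 0 k0)) y v.
  move=> y Wy j k v.
  have -> : (fun x => N (xpart x) * (0 + \sum_(k0<n) C k0 j k (xpart x) * ppart x 0 k0)) =
    (fun x => N (xpart x)) * ((cst 0) + \sum_(k0<n) ((fun x => C k0 j k (xpart x)) * (fun x => ppart x 0 k0))).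
    by apply/funext => z; rewrite /= fct_sumE.
  apply: derivableM; first by apply/(comp_x N y v).2; apply: diff_derivable; exact: dN.
  apply: derivableD; first exact: derivable_cst.
  apply: derivable_sum => k0; apply: derivableM; last exact: ppart_der.
  by apply/(comp_x (C k0 j k) y v).2; apply: diff_derivable; exact: dC.
have K1 : forall y, W y -> forall a b c,
    partial (scale2 L (add2 A P) b c) a y = partial (scale2 L A b c) a y + T a b c y.
{ move=> y Wy a b c.
  rewrite /T; have [[i [Ea Es]]|[i [Ea Es]]] := @split_case n a; rewrite Es; subst a.
  all: rewrite /T /partial /A /P /L /scale2 /add2 /liftS /pullback /Omega /sigma.
  all: case: (fintype.split b) => j; case: (fintype.split c) => k /=; try by apply: (etrans _ (esym (addr0 _))); congr (derive _ _ _); apply/funext => z; rewrite !addr0.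
  all: rewrite (_ : (fun x => _) = (fun x => N (xpart x) * (0 + \sum_(k0<n) C k0 j k (xpart x) * ppart x 0 k0)) + (fun x => N (xpart x) * f j k (xpart x))); last by apply/funext => z /=; rewrite mulrDr.
  all: rewrite deriveD; [|exact: dS|exact: dF]; congr (_ + _).
  - rewrite -(lsub_delta_l R i); exact: (comp_x (fun x => N x * f j k x) y _).1.
  - have [E _] := comp_x (fun x => N x * f j k x) y (delta_mx 0 (rshift n i)).
    by rewrite E /xpart lsub_delta_r derive_zero. }
have sl : forall i : 'I_n, fintype.split (lshift n i) = inl i.
  by move=> i0; exact: (unsplitK (inl _ i0)).
have K2 : forall y, W y -> forall a b c, d2 (scale2 L (add2 A P)) a b c y =
    d2 (scale2 L A) a b c y + (T a b c y + T b c a y + T c a b y).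
  by move=> y Wy a b c; rewrite /d2 !K1 //; ring.
have K3 : forall y a b c, T a b c y + T b c a y + T c a b y =
   match fintype.split a, fintype.split b, fintype.split c with
   | inl i, inl j, inl k => d2 (scale2 N f) i j k (xpart y) | _, _, _ => 0 end.
  move=> y a b c; rewrite /T.
  by case: (fintype.split a) => i; case: (fintype.split b) => j; case: (fintype.split c) => k; rewrite /= ?addr0.
have K4 : forall x, U x -> forall i j k,
    partial (scale2 L A (lshift n j) (lshift n k)) (lshift n i) (row_mx x 0) = 0.
  move=> x Ux i j k.
  rewrite /partial /A /L /scale2 /add2 /liftS /Omega /sigma !sl /=.
  rewrite (proj1 (@line_lem R (n+n) (n+n) _ (cst 0) _ _ (row_mx x 0) (delta_mx 0 (lshift n i)) _)); first exact: derive_cst.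
  move=> h /=.
  have -> : ppart (h *: delta_mx 0 (lshift n i) + row_mx x 0) = 0.
    by rewrite /ppart linearD linearZ /= rsub_delta_l row_mxKr scaler0 addr0.
  rewrite big1 ?addr0 ?mulr0 // => k0 _; by rewrite mxE mulr0.
split.
- move=> hE.
  have hG : closed2 U (scale2 N f).
    move=> x Ux i j k.
    have Wy0 : W (row_mx x 0) by rewrite /W /preimage /= /xpart row_mxKl.
    have := hE _ Wy0 (lshift n i) (lshift n j) (lshift n k).
    rewrite K2 // K3 !sl {1}/d2 !K4 // !add0r /xpart row_mxKl; done.
  split => // y Wy a b c.
  have := hE y Wy a b c; rewrite K2 // K3.
  case: (fintype.split a) => i; case: (fintype.split b) => j; case: (fintype.split c) => k; rewrite /= ?addr0 //.
  by rewrite (hG _ Wy) addr0.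
- case=> hE hG y Wy a b c.
  rewrite K2 // K3 (hE y Wy) add0r.
  case: (fintype.split a) => i; case: (fintype.split b) => j; case: (fintype.split c) => k //=.
  exact: (hG _ Wy).
Qed.
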